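(* Let $m \le n$, let $1 \le h \le k \le m$, and let $|v\rangle \in \mathcal{H}_n \otimes \mathcal{H}_m$ be a unit vector with $SR(|v\rangle) \le k$. Then there exist nonnegative real constants $d_1,\dots,d_k$ and (not necessarily distinct) unit vectors $|v_1\rangle,\dots,|v_k\rangle \in \mathcal{H}_n\otimes\mathcal{H}_m$ such that: - $\sum_{j=1}^k d_j^2 = h$; - $SR(|v_j\rangle) \le h$ for all $j$; - $h|v\rangle = \sum_{j=1}^k d_j |v_j\rangle$.
   Context: $\mathcal{H}_d = \mathbb{C}^d$ and $m \le n$. $SR(|v\rangle)$ is the Schmidt rank of $|v\rangle$: the least number of terms $|a\rangle\otimes|b\rangle$ needed to write $|v\rangle$ as a linear combination of such terms, equivalently the rank of its $n\times m$ coefficient matrix. *)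

(* Defs.v *)
(* C^d realised as R[i]^d for a real closed field R
   (R = the reals gives the usual complex numbers). *)
From HB Require Import structures.
From mathcomp Require Import all_boot all_order all_algebra.
From mathcomp.real_closed Require Export complex.
Set Implicit Arguments. Unset Strict Implicit. Unset Printing Implicit Defensive.
Import Order.TTheory GRing.Theory Num.Theory.
Local Open Scope ring_scope.

(* A vector of H_n (x) H_m is represented by its n x m coefficient matrix
   (v = sum_{i,j} A i j |i>|j>). *)
Definition tensor (R : rcfType) (n m : nat) := 'M[R[i]]_(n, m).

Definition sqnorm (R : rcfType) (n m : nat) (A : 'M[R[i]]_(n, m)) : R[i] :=
  \sum_(i < n) \sum_(j < m) `|A i j| ^+ 2.

Definition unit_vec (R : rcfType) (n m : nat) (A : 'M[R[i]]_(n, m)) : Prop :=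
  sqnorm A = 1.

Definition SR (R : rcfType) (n m : nat) (A : 'M[R[i]]_(n, m)) : nat := \rank A.

(* Main.v *)
Require Import Defs.
From HB Require Import structures.
From mathcomp Require Import all_boot all_order all_algebra.
From mathcomp.real_closed Require Import complex.
From mathcomp Require Import zify ring lra.
From mathcomp Require Import sesquilinear spectral.
Import Order.TTheory GRing.Theory Num.Theory Num.Def.
Local Open Scope ring_scope.
Set Implicit Arguments. Unset Strict Implicit.

Section H.
Variable R : rcfType.
Local Notation C := (R[i]).

Lemma sqnorm_tr n m (A : 'M[C]_(n, m)) :
  sqnorm A = \tr (A *m (A ^t conjC)%sesqui).
Proof.
rewrite /sqnorm /mxtrace; apply: eq_bigr => i _; rewrite mxE.
by apply: eq_bigr => j _; rewrite !mxE normCK.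
Qed.

Lemma sqnorm_unitary n m p (X : 'M[C]_(n, m)) (B : 'M[C]_(m, p)) :
  B *m (B ^t conjC)%sesqui = 1%:M -> sqnorm (X *m B) = sqnorm X.
Proof.
move=> HB; rewrite !sqnorm_tr trmx_mul map_mxM mulmxA -(mulmxA X) HB mulmx1.
by [].
Qed.

Lemma sum_eq_and (h x y : nat) :
  (\sum_(t < h) ((x == t) * (y == t)))%N = ((x == y) && (x < h))%N.
Proof.
elim: h => [|h IH]; first by rewrite big_ord0 ltn0 andbF.
rewrite big_ord_recr /= IH.
lia.
Qed.

Lemma sum_lt (k h : nat) : (\sum_(t < k) (t < h))%N = minn k h.
Proof.
elim: k => [|k IH]; first by rewrite big_ord0 min0n.
rewrite big_ord_recr /= IH.
case: (ltnP k h) => H; rewrite /=; lia.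
Qed.


Definition fw (k j l : nat) : nat := if (j <= l)%N then (l - j)%N else (l + k - j)%N.

Lemma fw_lt k j l : (j < k)%N -> (l < k)%N -> (fw k j l < k)%N.
Proof. rewrite /fw; case: ifP => H; lia. Qed.

Lemma fw_inj k j l l' : (j < k)%N -> (l < k)%N -> (l' < k)%N ->
  fw k j l = fw k j l' -> l = l'.
Proof. move=> a b c; rewrite /fw; case: ifP => H1; case: ifP => H2 => E; lia. Qed.

Lemma fw_count k h l : (l < k)%N -> (h <= k)%N ->
  (\sum_(j < k) (fw k j l < h))%N = h.
Proof.
move=> lk hk.
pose g (j : 'I_k) : 'I_k := Ordinal (@fw_lt k j l (ltn_ord j) lk).
have ginj : injective g.
  move=> a b /(congr1 val) /=; rewrite /fw.
  move: (ltn_ord a) (ltn_ord b) => ak bk.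
  case: ifP => H1; case: ifP => H2 => H; apply: ord_inj; lia.
rewrite -[RHS](_ : minn k h = h); last by lia.
by rewrite -sum_lt [RHS](reindex_inj ginj).
Qed.

Lemma sqnorm_ge0 n m (A : 'M[C]_(n, m)) : 0 <= sqnorm A.
Proof. by apply: sumr_ge0 => i _; apply: sumr_ge0 => j _; apply: exprn_ge0. Qed.

Lemma sqnorm_eq0 n m (A : 'M[C]_(n, m)) : sqnorm A = 0 -> A = 0.
Proof.
move=> H; apply/matrixP => i j; rewrite mxE.
have Hi : \sum_(j0 < m) `|A i j0| ^+ 2 = 0.
  by apply: (psumr_eq0P _ H) => // i0 _; apply: sumr_ge0 => j0 _; exact: exprn_ge0.
have : `|A i j| ^+ 2 = 0 by apply: (psumr_eq0P _ Hi) => // j0 _; exact: exprn_ge0.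
by move/eqP; rewrite sqrf_eq0 normr_eq0 => /eqP.
Qed.

Lemma sqnormZ n m (a : C) (A : 'M[C]_(n, m)) : sqnorm (a *: A) = `|a| ^+ 2 * sqnorm A.
Proof.
rewrite /sqnorm mulr_sumr; apply: eq_bigr => i _; rewrite mulr_sumr.
by apply: eq_bigr => j _; rewrite mxE normrM exprMn.
Qed.

Lemma sqnorm_real n m (A : 'M[C]_(n, m)) : sqnorm A = (complex.Re (sqnorm A))%:C%C /\ 0 <= complex.Re (sqnorm A).
Proof.
have H := sqnorm_ge0 A.
have HI : complex.Im (sqnorm A) = 0 by apply: ger0_Im.
split; first by rewrite {1}[sqnorm A]complexE HI mulr0 addr0.
by move: H; rewrite lecE /= => /andP [].
Qed.

Lemma sqnorm_delta n m (i0 : 'I_n) (j0 : 'I_m) : sqnorm (delta_mx i0 j0 : 'M[C]_(n, m)) = 1.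
Proof.
rewrite /sqnorm (bigD1 i0) //= (bigD1 j0) //= !mxE !eqxx /= normr1 expr1n.
rewrite big1 ?addr0; last by move=> j /negbTE Hj; rewrite mxE Hj andbF normr0 expr0n.
rewrite big1 ?addr0 //; move=> i /negbTE Hi; rewrite big1 // => j _.
by rewrite mxE Hi normr0 expr0n.
Qed.

End H.

Unset Implicit Arguments.
Theorem lemma4p12 (R : rcfType) (n m h k : nat)
  (Hmn : (m <= n)%N) (Hh1 : (1 <= h)%N) (Hhk : (h <= k)%N) (Hkm : (k <= m)%N)
  (v : 'M[R[i]]_(n, m)) (Hv : unit_vec v) (HSR : (SR v <= k)%N) :
  exists (d : 'I_k -> R) (vs : 'I_k -> 'M[R[i]]_(n, m)),
    (forall j, 0 <= d j) /\
    (forall j, unit_vec (vs j)) /\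
    \sum_(j < k) d j ^+ 2 = h%:R /\
    (forall j, (SR (vs j) <= h)%N) /\
    h%:R *: v = \sum_(j < k) ((d j)%:C)%C *: vs j.
Proof.
set r := \rank v.
have Hr : (r <= k)%N by [].
set B := schmidt (row_base v).
have HB : B *m (B ^t conjC)%sesqui = 1%:M.
  by apply/unitarymxP; apply: schmidt_unitarymx; apply: rank_leq_col.
have Hvsub : (v <= B)%MS.
  by rewrite (eqmx_schmidt_free (row_base_free v)) eq_row_base.
have [X HX] := submxP Hvsub.
set Cm := v *m (B ^t conjC)%sesqui.
have HvC : v = Cm *m B.
  have e : X *m B *m (B ^t conjC)%sesqui *m B = X *m B.
    by rewrite -(mulmxA X) HB mulmx1.
  by rewrite -HX in e; rewrite /Cm e.
have HsC : sqnorm Cm = 1.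
  by rewrite -(sqnorm_unitary Cm HB) -HvC.
clearbody Cm.
pose P (j : 'I_k) : 'M[R[i]]_r :=
  \matrix_(l, l') (((l == l') && (fw k j l < h)%N)%:R).
pose E (j : 'I_k) : 'M[R[i]]_(r, h) := \matrix_(l, t) ((fw k j l == t)%:R).
have HPE : forall j, P j = E j *m (E j)^T.
  move=> j; apply/matrixP => l l'; rewrite !mxE.
  under eq_bigr => t _ do rewrite !mxE -natrM.
  rewrite -natr_sum sum_eq_and; congr (_%:R).
  case: (eqVneq l l') => [->|ll']; first by rewrite eqxx.
  case: (eqVneq (fw k j l) (fw k j l')) => // E1; exfalso.
  move/eqP: ll'; apply; apply: ord_inj; apply: (@fw_inj k j) => //.
  - exact: leq_trans (ltn_ord l) Hr.
  - exact: leq_trans (ltn_ord l') Hr.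
pose W (j : 'I_k) := Cm *m P j *m B.
have Hsum : \sum_j W j = h%:R *: v.
  rewrite /W -mulmx_suml -mulmx_sumr.
  have -> : \sum_j P j = (h%:R)%:M.
    apply/matrixP => l l'; rewrite summxE !mxE.
    case: (eqVneq l l') => [->|ll'] /=.
      under eq_bigr => j _ do rewrite mxE eqxx /=.
      rewrite -natr_sum fw_count //; last exact: leq_trans (ltn_ord l') Hr.
    rewrite mulr0n big1 // => j _; rewrite mxE (negbTE ll') //.
  by rewrite mul_mx_scalar -scalemxAl HvC.
have HsqW : forall j, sqnorm (W j) =
    \sum_(i0 < n) \sum_(l < r) (fw k j l < h)%:R * `|Cm i0 l| ^+ 2.
  move=> j; rewrite /W (sqnorm_unitary _ HB) /sqnorm.
  apply: eq_bigr => i0 _; apply: eq_bigr => l _.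
  rewrite !mxE (bigD1 l) //= big1 ?addr0; last first.
    by move=> l' /negbTE Hl; rewrite /P [X in _ * X]mxE Hl /= mulr0.
  rewrite /P [X in _ * X]mxE eqxx /=; case: (fw k j l < h)%N => /=.
    by rewrite mulr1 mul1r.
  by rewrite mulr0 normr0 expr0n /= mul0r.
have HsumW : \sum_j sqnorm (W j) = h%:R.
  under eq_bigr => j _ do rewrite HsqW.
  rewrite exchange_big /=.
  under eq_bigr => i0 _ do rewrite exchange_big /=.
  transitivity (h%:R * sqnorm Cm); last by rewrite HsC mulr1.
  rewrite /sqnorm mulr_sumr; apply: eq_bigr => i0 _.
  rewrite mulr_sumr; apply: eq_bigr => l _.
  rewrite -mulr_suml -natr_sum fw_count //.
  exact: leq_trans (ltn_ord l) Hr.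
pose d (j : 'I_k) : R := Num.sqrt (complex.Re (sqnorm (W j))).
have Hd : forall j, ((d j)%:C)%C ^+ 2 = sqnorm (W j).
  move=> j; have [E1 E2] := sqnorm_real (W j).
  by rewrite -rmorphXn /d sqr_sqrtr // -E1.
have n0 : (0 < n)%N by lia.
have m0 : (0 < m)%N by lia.
pose i0 : 'I_n := Ordinal n0.
pose j0 : 'I_m := Ordinal m0.
pose vs (j : 'I_k) : 'M[R[i]]_(n, m) :=
  if d j == 0 then delta_mx i0 j0 else ((d j)^-1)%:C%C *: W j.
have HdW : forall j, ((d j)%:C)%C *: vs j = W j.
  move=> j; rewrite /vs; case: (eqVneq (d j) 0) => [H0|H0].
    rewrite H0 scale0r; symmetry; apply: sqnorm_eq0.
    by rewrite -Hd H0 expr0n.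
  by rewrite scalerA -rmorphM mulfV // scale1r.
exists d, vs; split; first by move=> j; apply: sqrtr_ge0.
split.
  move=> j; rewrite /unit_vec /vs; case: (eqVneq (d j) 0) => [H0|H0].
    exact: sqnorm_delta.
  rewrite sqnormZ -Hd ger0_norm; last by rewrite ler0c invr_ge0 sqrtr_ge0.
  by rewrite -exprMn -rmorphM mulVf // rmorph1 expr1n.
split.
  apply: complexI; rewrite rmorph_sum /=.
  under eq_bigr => j _ do rewrite rmorphXn Hd.
  by rewrite HsumW rmorph_nat.
split.
  move=> j; rewrite /SR /vs; case: (eqVneq (d j) 0) => [H0|H0].
    by rewrite mxrank_delta.
  apply: leq_trans (mxrank_scale _ _) _.
  rewrite /W HPE !mulmxA -(mulmxA (Cm *m E j)); exact: mulmx_max_rank.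
rewrite -Hsum; apply: eq_bigr => j _; exact/esym/HdW.
Qed.
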